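(* Let $n,d\geq 1$. For every $n$-tuple $\mathbf{Q}=(Q_1,\dots,Q_n)$ of distinct points in $\mathbb{E}^d$ and every set $T$ of unordered pairs $\{i,j\}\subseteq\{1,\dots,n\}$, $$\dim T\leq\min\big(n-c(T)-1,\;d-1\big).$$ Moreover, the set of $n$-tuples $\mathbf{Q}$ for which equality holds for every such $T$ is open and dense in $(\mathbb{E}^d)^n$, and every $n$-tuple in this set is in simple position.
   Context: $\mathbb{E}^d$ is embedded in real projective space $\mathbb{P}^d$, with ideal hyperplane $h_\infty=\mathbb{P}^d\setminus\mathbb{E}^d$. For $i\neq j$, $p_{ij}$ is the ideal point of the line $Q_iQ_j$, i.e. the intersection of its projective closure with $h_\infty$. For a set $T$ of unordered pairs $\{i,j\}$, $\dim T$ is the projective dimension of the subspace of $h_\infty$ spanned by $\{p_{ij}:\{i,j\}\in T\}$ (with $\dim\emptyset=-1$), and $c(T)$ is the number of connected components of the graph with vertex set $\{1,\dots,n\}$ and edge set $T$ (isolated vertices counting as components). $\mathbf{Q}$ is in simple position if every subset of at most $d+1$ of the points $Q_1,\dots,Q_n$ is affinely independent. *)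

(* Defs.v *)
From HB Require Import structures.
From mathcomp Require Import all_boot all_order all_algebra.
From mathcomp Require Import all_classical all_reals topology normedtype.
Set Implicit Arguments. Unset Strict Implicit. Unset Printing Implicit Defensive.
Import Order.TTheory GRing.Theory Num.Theory.
Import numFieldNormedType.Exports.
Local Open Scope ring_scope.

(* An n-tuple of points of E^d is a matrix Q : 'M[R]_(n,d) whose i-th row is Q_i. *)

Definition distinct_pts (R : realType) (n d : nat) (Q : 'M[R]_(n, d)) : Prop :=
  injective (fun i : 'I_n => row i Q).

Definition pairset (n : nat) (T : {set {set 'I_n}}) : Prop :=
  forall e, e \in T -> #|e| = 2%N.

Definition adjT (n : nat) (T : {set {set 'I_n}}) : rel 'I_n :=
  fun i j => [set i; j] \in T.

(* c(T): number of connected components (isolated vertices count). *)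
Definition ncompT (n : nat) (T : {set {set 'I_n}}) : nat :=
  n_comp (adjT T) (predT : pred 'I_n).

(* The ideal point p_ij of line Q_iQ_j is represented (homogeneously) by the
   direction vector Q_j - Q_i; the projective span of {p_ij : ij in T} in
   h_infty ~ P^{d-1} has projective dimension = (linear rank of the span of
   these direction vectors) - 1, with dim(empty) = -1. *)
Definition dirspace (R : realType) (n d : nat) (Q : 'M[R]_(n, d))
    (T : {set {set 'I_n}}) : 'M[R]_d :=
  (\sum_(ij : 'I_n * 'I_n | [set ij.1; ij.2] \in T)
      <<row ij.2 Q - row ij.1 Q>>)%MS.

Definition dimT (R : realType) (n d : nat) (Q : 'M[R]_(n, d))
    (T : {set {set 'I_n}}) : int :=
  (\rank (dirspace Q T))%:Z - 1.

Definition affine_indep (R : realType) (n d : nat) (Q : 'M[R]_(n, d))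
    (S : {set 'I_n}) : Prop :=
  forall l : 'I_n -> R,
    \sum_(i in S) l i = 0 ->
    \sum_(i in S) l i *: row i Q = 0 ->
    forall i, i \in S -> l i = 0.

Definition simple_position (R : realType) (n d : nat) (Q : 'M[R]_(n, d)) : Prop :=
  forall S : {set 'I_n}, (#|S| <= d.+1)%N -> affine_indep Q S.

Definition dim_bound (n d : nat) (T : {set {set 'I_n}}) : int :=
  Num.min (n%:Z - (ncompT T)%:Z - 1) (d%:Z - 1).

Definition generic_set (R : realType) (n d : nat) : set 'M[R]_(n, d) :=
  [set Q | distinct_pts Q /\
     forall T : {set {set 'I_n}}, pairset T -> dimT Q T = dim_bound d T].
Arguments generic_set : clear implicits.

(* Main.v *)
Require Import Defs.
From HB Require Import structures.
From mathcomp Require Import all_boot all_order all_algebra.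
From mathcomp Require Import all_classical all_reals topology normedtype.
From mathcomp Require Import zify ring lra perm fingroup.
Import Order.TTheory GRing.Theory Num.Theory.
Import numFieldNormedType.Exports.
Local Open Scope ring_scope.

Section Graph.
Variables (n : nat) (T : {set {set 'I_n}}).
Local Notation e := (adjT T).

Lemma adjT_sym : symmetric e.
Proof. by move=> i j; rewrite /adjT finset.setUC. Qed.

Lemma adjT_csym : connect_sym e.
Proof. exact: sym_connect_sym adjT_sym. Qed.

Definition NR : {set 'I_n} := [set x | ~~ roots e x].

Lemma card_NR : #|NR| = (n - ncompT T)%N.
Proof.
rewrite /ncompT /n_comp_mem /NR.
have -> : #|predI (roots e) (mem predT)| = #|[set x | roots e x]|.
  by apply: eq_card => x; rewrite !inE andbT.
have := cardsC [set x | roots e x].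
have -> : ~: [set x | roots e x] = [set x | ~~ roots e x].
  by apply/setP => x; rewrite !inE.
move=> H.
have H2 : (#|[set x | roots e x]| + #|[set x | ~~ roots e x]| = n)%N.
  by rewrite H; exact: card_ord.
apply/eqP; rewrite -(eqn_add2l #|[set x | roots e x]|) subnKC; first by rewrite H2.
by apply: leq_trans (leq_addr #|[set x | ~~ roots e x]| _) _; rewrite H2.
Qed.

Lemma ncomp_le : (ncompT T <= n)%N.
Proof.
rewrite /ncompT /n_comp_mem.
by apply: leq_trans (max_card _) _; rewrite card_ord.
Qed.

End Graph.
Arguments NR {n}. Arguments adjT_csym {n}. Arguments adjT_sym {n}. Arguments card_NR {n}. Arguments ncomp_le {n}.

Section Mat.
Variables (R : realType) (n d : nat).
Implicit Types (Q : 'M[R]_(n, d)) (T : {set {set 'I_n}}).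

Lemma edge_sub Q T i j : [set i; j] \in T -> (row j Q - row i Q <= dirspace Q T)%MS.
Proof. by move=> H; rewrite /dirspace; apply: (sumsmx_sup (i, j)) => //; rewrite genmxE. Qed.

Lemma connect_sub Q T x y : connect (adjT T) x y -> (row y Q - row x Q <= dirspace Q T)%MS.
Proof.
case/connectP => p; elim: p x => [|z p IH] x /=; first by move=> _ ->; rewrite subrr sub0mx.
case/andP => Hxz Hp Hy.
have -> : row y Q - row x Q = (row y Q - row z Q) + (row z Q - row x Q) by rewrite addrA subrK.
by apply: addmx_sub; [exact: IH | exact: edge_sub].
Qed.

Lemma dirspace_ub Q T : (\rank (dirspace Q T) <= n - ncompT T)%N.
Proof.
set e := adjT T.
pose D : 'M[R]_(n, d) := \matrix_(x < n) (row x Q - row (fingraph.root e x) Q).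
have sDD : (dirspace Q T <= D)%MS.
  apply/sumsmx_subP => [[i j]] /= Hij; rewrite genmxE.
  have Hr : fingraph.root e i = fingraph.root e j.
    by apply/eqP; rewrite (sameP eqP (fingraph.rootP (adjT_csym T))); apply: connect1.
  have -> : row j Q - row i Q = row j D - row i D.
    by rewrite !rowK Hr opprB addrA subrK.
  by apply: addmx_sub; rewrite ?eqmx_opp row_sub.
pose f := fun k : 'I_#|NR T| => enum_val k.
have sDs : (D <= rowsub f D)%MS.
  apply/row_subP => x.
  case: (boolP (x \in NR T)) => Hx.
    by rewrite -(enum_rankK_in Hx Hx) -row_rowsub row_sub.
  move: Hx; rewrite inE negbK /roots => /eqP Hx.
  by rewrite rowK Hx subrr sub0mx.
rewrite -card_NR; apply: leq_trans (mxrankS (submx_trans sDD sDs)) _.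
exact: rank_leq_row.
Qed.

End Mat.
Arguments edge_sub {R n d}. Arguments connect_sub {R n d}. Arguments dirspace_ub {R n d}.

Definition bT {n} d (T : {set {set 'I_n}}) := minn (n - ncompT T) d.

Lemma dim_boundE n d (T : {set {set 'I_n}}) : dim_bound d T = (bT d T)%:Z - 1.
Proof.
rewrite /dim_bound /bT; have := ncomp_le T; move: (ncompT T) => c hc.
lia.
Qed.

Section Gram.
Variable R : realType.

Lemma gram_det r m (C : 'M[R]_(r, m)) : row_free C -> \det (C *m C^T) != 0.
Proof.
move=> hC; rewrite -unitfE -unitmxE -row_free_unit -kermx_eq0.
rewrite -submx0; apply/row_subP => i; rewrite submx0.
set v := row i _.
have hv : v *m (C *m C^T) = 0 by apply/sub_kermxP; exact: row_sub.
have hw : v *m C = 0.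
  set w := v *m C.
  have h0 : w *m w^T = 0 by rewrite trmx_mul mulmxA -(mulmxA v) hv mul0mx.
  have hs : \sum_k w 0 k * w 0 k = 0.
    move/matrix.matrixP: h0 => /(_ 0 0); rewrite !mxE => h.
    rewrite -[X in _ = X]h; apply: eq_bigr => k _; by rewrite [w^T _ _]mxE.
  apply/matrix.rowP => k; rewrite [RHS]mxE.
  have := psumr_eq0P (fun k _ => (sqr_ge0 (w 0 k) : 0 <= w 0 k * w 0 k)) hs (i:=k) isT.
  by move/eqP; rewrite mulf_eq0 orbb => /eqP.
have : (v <= kermx C)%MS by apply/sub_kermxP.
by move: hC; rewrite -kermx_eq0 => /eqP ->; rewrite submx0.
Qed.

Lemma det_gram_rank r m (C : 'M[R]_(r, m)) : \det (C *m C^T) != 0 -> \rank C = r.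
Proof.
rewrite -unitfE -unitmxE => /mxrank_unit h.
apply/eqP; rewrite eqn_leq rank_leq_row /= -{1}h; exact: mxrankM_maxl.
Qed.
End Gram.
Arguments gram_det {R r m}. Arguments det_gram_rank {R r m}.

Section Cont.
Variables (R : realType) (X : topologicalType).

Lemma cont_sum (I : Type) (r : seq I) (P : pred I) (F : I -> X -> R) :
  (forall i, continuous (F i)) -> continuous (fun x => \sum_(i <- r | P i) F i x).
Proof.
move=> hF; elim: r => [|i r IH].
  by under eq_fun do rewrite big_nil; exact: cst_continuous.
under eq_fun do rewrite big_cons; case: (P i).
  by move=> x; apply: continuousD; [exact: hF | exact: IH].
exact: IH.
Qed.

Lemma cont_prod (I : Type) (r : seq I) (P : pred I) (F : I -> X -> R) :
  (forall i, continuous (F i)) -> continuous (fun x => \prod_(i <- r | P i) F i x).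
Proof.
move=> hF; elim: r => [|i r IH].
  by under eq_fun do rewrite big_nil; exact: cst_continuous.
under eq_fun do rewrite big_cons; case: (P i).
  by move=> x; apply: continuousM; [exact: hF | exact: IH].
exact: IH.
Qed.

Lemma cont_det m (F : 'I_m -> 'I_m -> X -> R) :
  (forall i j, continuous (F i j)) -> continuous (fun x => \det (\matrix_(i, j) F i j x)).
Proof.
move=> hF.
have -> : (fun x => \det (\matrix_(i, j) F i j x)) =
   fun x => \sum_(s : perm_of 'I_m) (-1) ^+ s * \prod_i F i (s i) x.
  apply: funext => x; rewrite [LHS]/determinant; apply: eq_bigr => s _.
  by congr (_ * _); apply: eq_bigr => i _; rewrite mxE.
apply: cont_sum => s x.
apply: (@continuousM _ _ (fun=> (-1) ^+ s) (fun x => \prod_i F i (s i) x)).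
  exact: cst_continuous.
by apply: cont_prod => i; exact: hF.
Qed.

Lemma cont_gram r m (C : X -> 'M[R]_(r, m)) :
  (forall a k, continuous (fun x => C x a k)) ->
  continuous (fun x => \det (C x *m (C x)^T)).
Proof.
move=> hC.
have -> : (fun x => \det (C x *m (C x)^T)) =
   fun x => \det (\matrix_(a, b) \sum_k C x a k * C x b k).
  apply: funext => x; congr (\det _); apply/matrix.matrixP => a b; rewrite !mxE.
  by apply: eq_bigr => k _; rewrite mxE.
apply: cont_det => a b; apply: cont_sum => k x.
by apply: continuousM; [exact: hC | exact: hC].
Qed.
End Cont.
Arguments cont_sum {R X}. Arguments cont_prod {R X}. Arguments cont_det {R X}. Arguments cont_gram {R X}.

Section BMs.
Variables (R : realType) (n d : nat).
Implicit Types (Q M : 'M[R]_(n, d)) (T : {set {set 'I_n}}).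

Definition BM Q T : 'M[R]_(#|{: 'I_n * 'I_n}|, d) :=
  \matrix_(k < #|{: 'I_n * 'I_n}|)
    (if [set (enum_val k).1; (enum_val k).2] \in T
     then row (enum_val k).2 Q - row (enum_val k).1 Q else 0).

Lemma BM_entry Q T k c : BM Q T k c =
  if [set (enum_val k).1; (enum_val k).2] \in T
  then Q (enum_val k).2 c - Q (enum_val k).1 c else 0.
Proof. by rewrite mxE; case: ifP; rewrite !mxE. Qed.

Lemma BM_rank Q T : \rank (BM Q T) = \rank (dirspace Q T).
Proof.
apply/eqP; rewrite eqn_leq; apply/andP; split; apply: mxrankS.
  apply/row_subP => k; rewrite rowK; case: ifP => h; last exact: sub0mx.
  exact: edge_sub.
apply/sumsmx_subP => ij /= h; rewrite genmxE.
have := row_sub (enum_rank ij) (BM Q T); rewrite rowK enum_rankK h; exact.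
Qed.

Lemma BM_cont T k c : continuous (fun Q => BM Q T k c).
Proof.
have -> : (fun Q => BM Q T k c) = fun Q => if [set (enum_val k).1; (enum_val k).2] \in T
  then Q (enum_val k).2 c - Q (enum_val k).1 c else 0 by apply: funext => Q; rewrite BM_entry.
case: ([set (enum_val k).1; (enum_val k).2] \in T); last exact: cst_continuous.
move=> Q.
apply: (@continuousD _ R^o _ (fun Q : 'M[R]_(n, d) => Q (enum_val k).2 c) (fun Q => - Q (enum_val k).1 c)).
  exact: coord_continuous.
by apply: continuousN; exact: coord_continuous.
Qed.

Lemma BM_lin Q0 M t T : BM (Q0 + t *: (M - Q0)) T = BM Q0 T + t *: (BM M T - BM Q0 T).
Proof.
apply/row_matrixP => k; rewrite !rowK [in RHS]linearD /= [in RHS]linearZ /= [in RHS]linearB /= !rowK.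
case: ifP => _; last by rewrite subrr scaler0 addr0.
apply/matrix.rowP => c; rewrite !mxE; ring.
Qed.
End BMs.
Arguments BM {R n d}. Arguments BM_entry {R n d}. Arguments BM_rank {R n d}. Arguments BM_cont {R n d}. Arguments BM_lin {R n d}.

Section Poly.
Variable R : realType.

Lemma det_poly r m (A0 A1 : 'M[R]_(r, m)) : exists p : {poly R},
  forall t, p.[t] = \det ((A0 + t *: A1) *m (A0 + t *: A1)^T).
Proof.
pose P : 'M[{poly R}]_(r, m) := map_mx polyC A0 + 'X *: map_mx polyC A1.
exists (\det (P *m P^T)) => t.
have H := det_map_mx (horner_eval t) (P *m P^T).
transitivity (horner_eval t (\det (P *m P^T))); first by [].
rewrite -H.
rewrite map_mxM -map_trmx; congr (\det (_ *m _^T)).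
  apply/matrix.matrixP => i j; rewrite !mxE /= horner_evalE !hornerE; ring.
  
apply/matrix.matrixP => i j; rewrite !mxE /= horner_evalE !hornerE; ring.
Qed.
End Poly.
Arguments det_poly {R r m}.

Section Roots.
Variable R : realType.

Lemma poly_small_nonroot (p : {poly R}) (del : R) : p != 0 -> 0 < del ->
  exists t, 0 < t /\ t < del /\ p.[t] != 0.
Proof.
move=> hp hdel.
case: (pselect (exists t, 0 < t /\ t < del /\ p.[t] != 0)) => // hne; exfalso.
pose rs := [seq del / (k.+2)%:R | k <- iota 0 (size p)].
have hr : all (root p) rs.
  apply/allP => _ /mapP [k _ ->]; apply: contrapT => hk; apply: hne.
  exists (del / (k.+2)%:R); split; first by rewrite divr_gt0 // ltr0n.
  split; last by apply/negP.
  rewrite ltr_pdivrMr ?ltr0n // ltr_pMr // ltr1n //.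
have hu : uniq rs.
  rewrite map_inj_uniq ?iota_uniq // => k l /= /(mulfI (lt0r_neq0 hdel)) /invr_inj.
  by move/eqP; rewrite eqr_nat => /eqP [].
by have := max_poly_roots hp hr hu; rewrite size_map size_iota ltnn.
Qed.
End Roots.
Arguments poly_small_nonroot {R}.

Section Near.
Variables (R : realType) (X : topologicalType).

Lemma near_neq0 (g : X -> R) x : continuous g -> g x != 0 -> \forall y \near x, g y != 0.
Proof.
move=> hg hx.
suff H : nbhs (g x) (fun y : R => y != 0) by exact: (hg x _ H).
apply/nbhs_ballP; exists `|g x|; first by rewrite /= normr_gt0.
move=> y; rewrite -ball_normE /= => hy; apply/eqP => y0.
by move: hy; rewrite y0 subr0 ltxx.
Qed.
End Near.
Arguments near_neq0 {R X}.

Section PerT.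
Variables (R : realType) (n d : nat).
Implicit Types (Q M : 'M[R]_(n, d)) (T : {set {set 'I_n}}).

Lemma rowsub_le m p q (A : 'M[R]_(m, p)) (f : 'I_q -> 'I_m) : (\rank (rowsub f A) <= \rank A)%N.
Proof. by apply: mxrankS; apply/row_subP => a; rewrite row_rowsub row_sub. Qed.

Lemma cont_rowsub_BM T q (f : 'I_q -> 'I_#|{: 'I_n * 'I_n}|) :
  continuous (fun Q : 'M[R]_(n, d) => \det (rowsub f (BM Q T) *m (rowsub f (BM Q T))^T)).
Proof.
have := (@cont_gram R _ _ _ (fun Q : 'M[R]_(n, d) => rowsub f (BM Q T))). apply. move=> a k.
have -> : (fun x : 'M[R]_(n, d) => rowsub f (BM x T) a k) = fun x => BM x T (f a) k.
  by apply: funext => x; rewrite mxE.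
exact: BM_cont.
Qed.

Lemma rank_open T Q r : (r <= \rank (BM Q T))%N -> \forall Q' \near Q, (r <= \rank (BM Q' T))%N.
Proof.
move=> hr; set f := maxrankfun (BM Q T).
have h0 := gram_det _ (maxrowsub_free (BM Q T)).
have := near_neq0 _ _ (cont_rowsub_BM T _ f) h0.
apply: filterS => Q' hQ'.
apply: leq_trans hr _; rewrite -{1}(det_gram_rank _ hQ'); exact: rowsub_le.
Qed.

Lemma rank_dense T M Q0 r (A : set 'M[R]_(n, d)) : (r <= \rank (BM M T))%N -> nbhs Q0 A ->
  exists Q, A Q /\ (r <= \rank (BM Q T))%N.
Proof.
move=> hr hA; set f := maxrankfun (BM M T).
pose L := fun t : R => Q0 + t *: (M - Q0).
have hC t : rowsub f (BM (L t) T) =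
    rowsub f (BM Q0 T) + t *: (rowsub f (BM M T) - rowsub f (BM Q0 T)).
  by rewrite /L BM_lin; apply/matrix.matrixP => a k; rewrite !mxE.
have [p hp] := det_poly (rowsub f (BM Q0 T)) (rowsub f (BM M T) - rowsub f (BM Q0 T)).
have p1 : p.[1] != 0.
  by rewrite hp scale1r addrC subrK; exact: gram_det _ (maxrowsub_free _).
have pn0 : p != 0 by apply: contraNneq p1 => ->; rewrite horner0.
have hL : continuous L.
  move=> t; have := @continuousD R 'M[R]_(n, d) R^o (fun=> Q0) (fun t => t *: (M - Q0)) t.
  move=> H; apply: H.
    exact: cst_continuous.
  exact: scalel_continuous.
have hA0 : \forall t \near (0 : R), A (L t).
  by apply: (hL 0); rewrite /L scale0r addr0.
case/nbhs_ballP: hA0 => del hdel hb.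
have [t [t0 [tdel pt]]] := poly_small_nonroot _ _ pn0 hdel.
exists (L t); split.
  by apply: hb; rewrite -ball_normE /= sub0r normrN gtr0_norm.
apply: leq_trans hr _; rewrite -{1}(@det_gram_rank _ _ _ (rowsub f (BM (L t) T))).
  exact: rowsub_le.
by rewrite hC -hp.
Qed.
End PerT.
Arguments rank_open {R n d}. Arguments rank_dense {R n d}.

Section Exist.
Variables (R : realType) (n d : nat).

Lemma index_enum_val (A : {set 'I_n}) (k : 'I_#|A|) : index (enum_val k) (enum A) = k.
Proof.
rewrite (enum_val_nth (enum_val k)) index_uniq ?enum_uniq //.
by rewrite -cardE.
Qed.

Lemma exists_M (T : {set {set 'I_n}}) : exists M : 'M[R]_(n, d),
  (minn #|NR T| d <= \rank (dirspace M T))%N.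
Proof.
pose M : 'M[R]_(n, d) := \matrix_(x < n, c < d)
  ((x \in NR T) && (c == index x (enum (NR T)) :> nat))%:R.
exists M; set b := minn #|NR T| d.
have hbd : (b <= d)%N by exact: geq_minr.
rewrite -{1}(@rank_pid_mx R d d b hbd hbd); apply: mxrankS.
apply/row_subP => c.
case: (ltnP c b) => hc; last first.
  have -> : row c (pid_mx b : 'M[R]_d) = 0.
    by apply/matrix.rowP => j; rewrite !mxE ltnNge hc andbF.
  exact: sub0mx.
have hk : (c < #|NR T|)%N by apply: leq_trans hc (geq_minl _ _).
set x := enum_val (Ordinal hk).
have hx : x \in NR T by exact: enum_valP.
have -> : row c (pid_mx b : 'M[R]_d) = row x M - row (fingraph.root (adjT T) x) M.
  have hr : fingraph.root (adjT T) x \notin NR T.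
    by rewrite inE negbK; exact: roots_root (adjT_csym T) x.
  apply/matrix.rowP => j; rewrite !mxE (negbTE hr) /= subr0 hx /= index_enum_val /= hc andbT.
  by rewrite eq_sym.
apply: connect_sub; rewrite (adjT_csym T); exact: connect_root.
Qed.
End Exist.
Arguments exists_M {R n} d.

Section Simple.
Variables (R : realType) (n d : nat).

Lemma NR_star (T : {set {set 'I_n}}) (S : {set 'I_n}) (s0 : 'I_n) :
  s0 \in S -> (forall x, x \in S -> x != s0 -> [set s0; x] \in T) ->
  (#|S| - 1 <= #|NR T|)%N.
Proof.
move=> hs0 hT; set r := fingraph.root (adjT T) s0.
have hsub : S :\ r \subset NR T.
  apply/fintype.subsetP => x; rewrite in_setD1 => /andP [hxr hx]; rewrite inE /roots.
  have -> : fingraph.root (adjT T) x = r.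
    case: (eqVneq x s0) => [-> //|hne].
    apply/esym/(fingraph.rootP (adjT_csym T)); apply: connect1; exact: hT.
  by rewrite eq_sym.
rewrite (cardsD1 r S); apply: leq_trans (subset_leq_card hsub).
by rewrite leq_subLR leq_add2r leq_b1.
Qed.

Lemma simple_of_rank (Q : 'M[R]_(n, d)) :
  (forall T : {set {set 'I_n}}, pairset T -> (minn #|NR T| d <= \rank (dirspace Q T))%N) ->
  simple_position Q.
Proof.
move=> hQ S hS l hsum hvec.
case: (set_0Vmem S) => [-> i|[s0 hs0]]; first by rewrite inE.
set S' := S :\ s0.
pose T := [set [set s0; x] | x in S'].
have hTp : pairset T.
  move=> e /imsetP [x hx ->]; rewrite cards2; move: hx; rewrite in_setD1 => /andP [hx _].
  by rewrite eq_sym hx.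
have hNR : (#|S'| <= #|NR T|)%N.
  have := NR_star T S s0 hs0.
  have hs : forall x, x \in S -> x != s0 -> [set s0; x] \in T.
    by move=> x hx hne; apply: imset_f; rewrite in_setD1 hne hx.
  move=> /(_ hs); rewrite (cardsD1 s0 S) hs0 add1n subn1 /=; exact.
have hS'd : (#|S'| <= d)%N.
  by move: hS; rewrite (cardsD1 s0 S) hs0 add1n ltnS.
have hrk : (#|S'| <= \rank (dirspace Q T))%N.
  apply: leq_trans (hQ T hTp); by rewrite leq_min hNR hS'd.
pose Q' : 'M[R]_(n, d) := \matrix_(x < n) (row x Q - row s0 Q).
pose W := rowsub (fun k : 'I_#|S'| => enum_val k) Q'.
have hW : forall y, (y = s0 \/ y \in S') -> (row y Q - row s0 Q <= W)%MS.
  move=> y [->|hy]; first by rewrite subrr sub0mx.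
  have := row_sub (enum_rank_in hy y) W; rewrite row_rowsub enum_rankK_in // rowK; exact.
have hdW : (dirspace Q T <= W)%MS.
  apply/sumsmx_subP => [[i j]] /= hij; rewrite genmxE.
  case/imsetP: hij => x hx hij.
  have hi : i = s0 \/ i \in S'.
    have : i \in [set s0; x] by rewrite -hij set21.
    by case/set2P => ->; [left|right].
  have hj : j = s0 \/ j \in S'.
    have : j \in [set s0; x] by rewrite -hij set22.
    by case/set2P => ->; [left|right].
  have -> : row j Q - row i Q = (row j Q - row s0 Q) + - (row i Q - row s0 Q).
    by rewrite opprB addrA subrK.
  by apply: addmx_sub; rewrite ?eqmx_opp; apply: hW.
have hfree : row_free W.
  rewrite /row_free eqn_leq rank_leq_row /=.
  by apply: leq_trans hrk (mxrankS hdW).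
pose lam : 'rV[R]_#|S'| := \row_k l (enum_val k).
have hlam : lam *m W = 0.
  rewrite mulmx_sum_row.
  have -> : \sum_k lam 0 k *: row k W = \sum_(y in S') l y *: (row y Q - row s0 Q).
    rewrite [RHS]big_enum_val /=; apply: eq_bigr => k _.
    by rewrite mxE row_rowsub rowK.
  have -> : \sum_(y in S') l y *: (row y Q - row s0 Q) = \sum_(y in S) l y *: (row y Q - row s0 Q).
    rewrite (bigD1 s0 hs0) /= subrr scaler0 add0r.
    by apply: eq_bigl => y; rewrite in_setD1 andbC.
  rewrite (eq_bigr (fun y => l y *: row y Q - l y *: row s0 Q)); last first.
    by move=> y _; rewrite scalerBr.
  by rewrite sumrB -scaler_suml hsum hvec scale0r subrr.
have hl0 : lam = 0 by apply: (row_free_inj hfree); rewrite hlam mul0mx.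
have hS'0 : forall y, y \in S' -> l y = 0.
  move=> y hy; have := congr1 (fun v : 'rV[R]_#|S'| => v 0 (enum_rank_in hy y)) hl0.
  by rewrite /= !mxE enum_rankK_in.
move=> i hi; case: (eqVneq i s0) => [->|hne]; last by apply: hS'0; rewrite in_setD1 hne hi.
move: hsum; rewrite (bigD1 s0 hs0) /= big1 ?addr0 //.
by move=> y /andP [hy hne]; apply: hS'0; rewrite in_setD1 hne; exact: hy.
Qed.
End Simple.
Arguments simple_of_rank {R n d}.

Section Final.
Variables (R : realType) (n d : nat).
Implicit Types (Q : 'M[R]_(n, d)) (T : {set {set 'I_n}}).

Lemma bT_NR T : bT d T = minn #|NR T| d.
Proof. by rewrite /bT card_NR. Qed.

Lemma rank_ub Q T : (\rank (dirspace Q T) <= bT d T)%N.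
Proof. by rewrite leq_min dirspace_ub rank_leq_col. Qed.

Lemma part1 Q T : dimT Q T <= dim_bound d T.
Proof. by rewrite /dimT dim_boundE lerD2r lez_nat rank_ub. Qed.

Lemma dimT_eqE Q T : dimT Q T = dim_bound d T <-> (bT d T <= \rank (dirspace Q T))%N.
Proof.
rewrite /dimT dim_boundE; split.
  by move/addIr => [->].
move=> h; have -> : \rank (dirspace Q T) = bT d T.
  by apply/eqP; rewrite eqn_leq h rank_ub.
by [].
Qed.

Lemma generic_of_rank Q : (1 <= d)%N ->
  (forall T, pairset T -> (bT d T <= \rank (dirspace Q T))%N) -> generic_set R n d Q.
Proof.
move=> hd hQ.
have hs : simple_position Q.
  by apply: simple_of_rank => T hT; rewrite -bT_NR; exact: hQ.
split; last by move=> T hT; apply/dimT_eqE; exact: hQ.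
move=> i j hij; apply/eqP; apply: contraT => hne.
pose l := fun k : 'I_n => if k == i then 1 else if k == j then -1 else (0 : R).
have hS : (#|[set i; j]| <= d.+1)%N by rewrite cards2 hne ltnS.
have hnot : i \notin [set j] by rewrite inE.
have := hs _ hS l.
have hji : (j == i) = false by rewrite eq_sym (negbTE hne).
rewrite /l big_setU1 //= big_set1 eqxx hji eqxx addrN.
rewrite big_setU1 //= big_set1 eqxx hji eqxx.
rewrite /= in hij; rewrite hij scale1r scaleN1r addrN.
move=> /(_ erefl erefl i); rewrite set21 eqxx => /(_ isT) /eqP.
by rewrite oner_eq0.
Qed.
End Final.
Arguments generic_of_rank {R n d}. Arguments part1 {R n d}. Arguments dimT_eqE {R n d}. Arguments bT_NR {n} d.

Local Open Scope classical_set_scope.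

Theorem lemma5p5 (R : realType) (n d : nat) (hn : (1 <= n)%N) (hd : (1 <= d)%N) :
  (forall (Q : 'M[R]_(n, d)) (T : {set {set 'I_n}}),
      distinct_pts Q -> pairset T -> dimT Q T <= dim_bound d T)
  /\ open (generic_set R n d)
  /\ dense (generic_set R n d)
  /\ (forall Q : 'M[R]_(n, d), generic_set R n d Q -> simple_position Q).
Proof.
split; first by move=> Q T _ _; exact: part1.
have hgen : forall Q : 'M[R]_(n, d), generic_set R n d Q ->
    forall T, pairset T -> (bT d T <= \rank (BM Q T))%N.
  by move=> Q [_ hQ] T hT; rewrite BM_rank; apply/dimT_eqE/hQ.
have hUo : forall T : {set {set 'I_n}}, open [set Q : 'M[R]_(n, d) | (bT d T <= \rank (BM Q T))%N].
  by move=> T; rewrite openE => Q hQ; exact: rank_open.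
split.
  rewrite openE => Q hQ; rewrite /interior /=.
  have : \forall Q' \near Q, forall T : {set {set 'I_n}},
      pairset T -> (bT d T <= \rank (BM Q' T))%N.
    have H : forall T : {set {set 'I_n}}, \forall Q' \near Q,
        pairset T -> (bT d T <= \rank (BM Q' T))%N.
      move=> T; case: (pselect (pairset T)) => hT.
        by move: (rank_open _ _ _ (hgen Q hQ T hT)); apply: filterS => Q' h _.
      apply: (@filterS _ _ (nbhs_filter Q) setT); last exact: (@filterT _ _ (nbhs_filter Q)).
      by move=> Q' _ /hT.
    exact: (filter_forall (nbhs_filter Q) H).
  apply: filterS => Q' h; apply: generic_of_rank hd _ => T hT; rewrite -BM_rank; exact: h.
split.
  move=> O [Q0 hQ0] hO.
  have claim : forall (s : seq {set {set 'I_n}}) (O : set 'M[R]_(n, d)) Q0, open O -> O Q0 ->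
      exists Q, O Q /\ forall T, T \in s -> (bT d T <= \rank (BM Q T))%N.
    elim => [|T s IH] O' Q1 hO' hQ1; first by exists Q1.
    have [M hM] := exists_M (R:=R) d T.
    have hN : nbhs Q1 O' by move: hO'; rewrite openE => /(_ Q1 hQ1).
    have hMb : (bT d T <= \rank (BM M T))%N by rewrite BM_rank bT_NR.
    have [Q2 [hQ2 hr]] := rank_dense T M Q1 (bT d T) O' hMb hN.
    have [Q [[hQO hQT] hQs]] := IH (O' `&` [set Q | (bT d T <= \rank (BM Q T))%N]) Q2
        (openI hO' (hUo T)) (conj hQ2 hr).
    exists Q; split => // T'; rewrite inE => /orP [/eqP -> //|]; exact: hQs.
  have [Q [hQ hall]] := claim (enum {: {set {set 'I_n}}}) O Q0 hO hQ0.
  exists Q; split => //; apply: generic_of_rank hd _ => T _; rewrite -BM_rank.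
  by apply: hall; rewrite mem_enum.
move=> Q hQ; apply: simple_of_rank => T hT; rewrite -bT_NR -BM_rank; exact: hgen.
Qed.
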